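(* Let $(X,\mathscr B,\mu,T)$ be a 1-step Markov shift and $\alpha$ its finite time-0 generating partition. Let $c_S^n=2^{-n}$ for all $S\subset n^*$. Then $$\operatorname{Asc}_\mu(X,\alpha,T)=\frac12\sum_{i=1}^\infty\frac1{2^i}H_\mu(\alpha\mid\alpha_i).$$
   Context: A 1-step Markov shift: $X=\mathcal A^{\mathbb Z}$ for a finite alphabet $\mathcal A$, $T$ the shift, $\mu$ the shift-invariant Markov measure determined by a stochastic matrix $P$ and a $P$-fixed probability vector $p$ ($\mu\{x_i=j_0,\dots,x_{i+k}=j_k\}=p_{j_0}P_{j_0j_1}\cdots P_{j_{k-1}j_k}$). The time-0 partition is $\alpha=\{\{x:x_0=a\}:a\in\mathcal A\}$; $\alpha_i=T^{-i}\alpha$, and for $S\subset n^*=\{0,\dots,n-1\}$, $\alpha_S=\bigvee_{i\in S}T^{-i}\alpha$. $H_\mu(\alpha\mid\beta)$ is conditional entropy. $\operatorname{Asc}_\mu(X,\alpha,T)=\lim_{n\to\infty}\frac1n\sum_{S\subset n^*}c_S^nH_\mu(\alpha_S)$. *)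

(* Defs.v *)
From HB Require Import structures.
From mathcomp Require Import all_boot all_order all_algebra.
From mathcomp Require Import all_classical all_reals all_analysis.
Set Implicit Arguments. Unset Strict Implicit. Unset Printing Implicit Defensive.
Import Order.TTheory GRing.Theory Num.Theory.
Local Open Scope ring_scope.

Section MarkovShift.
Variables (R : realType) (A : finType) (p : A -> R) (P : A -> A -> R).

Definition stochastic_matrix : Prop :=
  (forall a b, 0 <= P a b) /\ (forall a, \sum_(b : A) P a b = 1).
Definition stationary_prob_vector : Prop :=
  (forall a, 0 <= p a) /\ \sum_(a : A) p a = 1 /\
  (forall b, \sum_(a : A) p a * P a b = p b).

Fixpoint path_prod (a : A) (s : seq A) : R :=
  if s is b :: t then P a b * path_prod b t else 1.

(* mu{x_i = j_0, ..., x_{i+k} = j_k} = p_{j0} P_{j0 j1} ... P_{j_{k-1} j_k}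
   (independent of i); the empty word has measure 1. *)
Definition mu_word (s : seq A) : R :=
  if s is a :: t then p a * path_prod a t else 1.

(* Measure of an event depending only on coordinates 0..n-1
   (a union of cylinders over the window n* = {0,...,n-1}). *)
Definition mu_win (n : nat) (E : pred (n.-tuple A)) : R :=
  \sum_(w : n.-tuple A | E w) mu_word w.

(* The atom of alpha_S = \/_{i in S} T^{-i} alpha labelled by f : S -> A,
   i.e. the set {x : x_i = f i for all i in S}. *)
Definition mu_atom (n : nat) (S : {set 'I_n})
  (f : {ffun {i : 'I_n | i \in S} -> A}) : R :=
  mu_win (fun w : n.-tuple A => [forall i : {i : 'I_n | i \in S}, tnth w (val i) == f i]).

Definition H_alpha (n : nat) (S : {set 'I_n}) : R :=
  - \sum_(f : {ffun {i : 'I_n | i \in S} -> A})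
      (if mu_atom f == 0 then 0 else mu_atom f * ln (mu_atom f)).

Definition H_alpha_given_alpha_i (i : nat) : R :=
  - \sum_(a : A) \sum_(b : A)
      (let q := mu_win (fun w : i.+1.-tuple A =>
                   (tnth w ord0 == a) && (tnth w ord_max == b)) in
       let r := mu_win (fun w : i.+1.-tuple A => tnth w ord_max == b) in
       if q == 0 then 0 else q * ln (q / r)).

(* The averaged sequence (1/n) sum_{S subset n*} c_S^n H_mu(alpha_S);
   Asc is its limit as n -> oo. *)
Definition asc_seq (c : forall n : nat, {set 'I_n} -> R) (n : nat) : R :=
  n%:R^-1 * \sum_(S : {set 'I_n}) c n S * H_alpha S.

End MarkovShift.

(* Main.v *)
Set Warnings "-all".
Require Import Defs.
From HB Require Import structures.
From mathcomp Require Import all_boot all_order all_algebra.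
From mathcomp Require Import all_classical all_reals all_analysis.
From mathcomp Require Import ring lra.
Import Order.TTheory GRing.Theory Num.Theory.
Import numFieldNormedType.Exports.
Local Open Scope classical_set_scope.
Local Open Scope ring_scope.

Lemma big_tuple_cons (R : realType) (T : finType) (n : nat) (F : n.+1.-tuple T -> R) :
  \sum_(w : n.+1.-tuple T) F w = \sum_(b : T) \sum_(w : n.-tuple T) F (cons_tuple b w).
Proof.
rewrite pair_big /=.
rewrite (reindex (fun x : T * n.-tuple T => cons_tuple x.1 x.2)) //.
exists (fun w : n.+1.-tuple T => (thead w, behead_tuple w)).
- by case=> b w _; congr pair; apply: val_inj.
- move=> w _; case/tupleP: w => b w; exact: val_inj.
Qed.

Lemma big_tuple0 (R : realType) (T : finType) (F : 0.-tuple T -> R) :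
  \sum_(w : 0.-tuple T) F w = F [tuple].
Proof. by rewrite (big_pred1 [tuple]) // => w /=; apply/esym/eqP/val_inj; rewrite /= tuple0. Qed.

Lemma big_option_sum (R : realType) (T : finType) (F : option T -> R) :
  \sum_(x : option T) F x = F None + \sum_(a : T) F (Some a).
Proof.
transitivity (\sum_(x <- None :: map Some (enum T)) F x); last first.
  by rewrite big_cons big_map big_enum.
apply: perm_big; apply: uniq_perm.
- exact: index_enum_uniq.
- rewrite /= map_inj_uniq; last by move=> x y [].
  rewrite enum_uniq andbT; by apply/negP => /mapP [].
- by case=> [a|]; rewrite mem_index_enum /= ?in_cons //= mem_map ?mem_enum //; move=> x y [].
Qed.

Section Markov.
Variables (R : realType) (A : finType) (p : A -> R) (P : A -> A -> R).
Hypothesis HP : stochastic_matrix P.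
Hypothesis Hp : stationary_prob_vector p P.

Fixpoint Pn (d : nat) (a b : A) : R :=
  if d is d'.+1 then \sum_c Pn d' a c * P c b else (a == b)%:R.

Lemma P_ge0 a b : 0 <= P a b. Proof. by case: HP. Qed.
Lemma P_row a : \sum_b P a b = 1. Proof. by case: HP. Qed.
Lemma p_ge0 a : 0 <= p a. Proof. by case: Hp. Qed.
Lemma p_sum : \sum_a p a = 1. Proof. by case: Hp => _ []. Qed.
Lemma p_stat b : \sum_a p a * P a b = p b. Proof. by case: Hp => _ []. Qed.

Lemma Pn0 (f : A -> R) a : \sum_c Pn 0 a c * f c = f a.
Proof.
rewrite (bigD1 a) //= eqxx mul1r big1 ?addr0 // => c /negbTE.
by rewrite eq_sym => ->; rewrite mul0r.
Qed.

Lemma Pn_ge0 d a b : 0 <= Pn d a b.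
Proof.
elim: d b => [|d IH] b /=; first by rewrite ler0n.
by apply: sumr_ge0 => c _; rewrite mulr_ge0 ?P_ge0.
Qed.

Lemma Pn_row d a : \sum_b Pn d a b = 1.
Proof.
elim: d => [|d IH] /=.
  transitivity (\sum_c Pn 0 a c * (fun=> 1 : R) c); first by apply: eq_bigr => c _; rewrite mulr1.
  exact: Pn0.
rewrite exchange_big /= -[RHS]IH; apply: eq_bigr => c _.
by rewrite -mulr_sumr P_row mulr1.
Qed.

Lemma Pn_stat d b : \sum_a p a * Pn d a b = p b.
Proof.
elim: d b => [|d IH] b /=.
  rewrite (bigD1 b) //= eqxx mulr1 big1 ?addr0 // => c /negbTE ->.
  by rewrite mulr0.
under eq_bigr do rewrite mulr_sumr.
rewrite exchange_big /= -[RHS]p_stat; apply: eq_bigr => c _.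
by rewrite -IH mulr_suml; apply: eq_bigr => a _; rewrite mulrA.
Qed.

Lemma PnS_sum d a (f : A -> R) :
  \sum_c Pn d a c * \sum_b P c b * f b = \sum_b Pn d.+1 a b * f b.
Proof.
under eq_bigr do rewrite mulr_sumr.
rewrite exchange_big /=; apply: eq_bigr => b _.
by rewrite mulr_suml; apply: eq_bigr => c _; rewrite mulrA.
Qed.

Definition ok (x : option A) (b : A) : bool :=
  if x is Some a then b == a else true.

Fixpoint Kd (d : nat) (a : A) (o : seq (option A)) : R :=
  match o with
  | [::] => 1
  | None :: o' => Kd d.+1 a o'
  | Some b :: o' => Pn d a b * Kd 1 b o'
  end.

Fixpoint Z0 (o : seq (option A)) : R :=
  match o with
  | [::] => 1
  | None :: o' => Z0 o'
  | Some a :: o' => p a * Kd 1 a o'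
  end.

Lemma Kd_ge0 o d a : 0 <= Kd d a o.
Proof.
elim: o d a => [|[b|] o IH] d a //=; by rewrite ?mulr_ge0 ?Pn_ge0.
Qed.

Lemma Z0_ge0 o : 0 <= Z0 o.
Proof. elim: o => [|[b|] o IH] //=; by rewrite mulr_ge0 ?p_ge0 ?Kd_ge0. Qed.

Definition Sfun (c : A) (o : seq (option A)) : R :=
  \sum_(w : (size o).-tuple A | all2 ok o w) path_prod P c w.

Lemma Sfun_cons c x o :
  Sfun c (x :: o) = \sum_(b | ok x b) P c b * Sfun b o.
Proof.
rewrite /Sfun big_mkcond /= big_tuple_cons [RHS]big_mkcond /=.
apply: eq_bigr => b _ /=.
case: (ok x b) => /=; last by rewrite big1.
by rewrite mulr_sumr [RHS]big_mkcond; apply: eq_bigr => w _; case: ifP; rewrite ?mulr0.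
Qed.

Lemma Sfun_nil c : Sfun c [::] = 1.
Proof. by rewrite /Sfun big_mkcond /= big_tuple0. Qed.

Lemma Sfun_Kd o : forall d a, \sum_c Pn d a c * Sfun c o = Kd d.+1 a o.
Proof.
elim: o => [|x o IH] d a.
  by under eq_bigr do rewrite Sfun_nil mulr1; rewrite Pn_row.
under eq_bigr do rewrite Sfun_cons.
case: x => [e|] /=.
  under eq_bigr do rewrite big_pred1_eq.
  rewrite -(IH 0%N e) Pn0.
  by under eq_bigr do rewrite mulrA; rewrite -mulr_suml.
by rewrite PnS_sum IH.
Qed.

Lemma Sfun_K o a : Sfun a o = Kd 1 a o.
Proof. by rewrite -Sfun_Kd Pn0. Qed.

Lemma Sfun_stat o : \sum_b p b * Sfun b o = Z0 o.
Proof.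
elim: o => [|x o IH].
  by under eq_bigr do rewrite Sfun_nil mulr1; rewrite p_sum.
under eq_bigr do rewrite Sfun_cons.
case: x => [a|] /=.
  under eq_bigr do rewrite big_pred1_eq mulrA.
  by rewrite -mulr_suml p_stat Sfun_K.
under eq_bigr do rewrite mulr_sumr.
rewrite exchange_big /= -IH; apply: eq_bigr => c _.
by rewrite -[in RHS]p_stat mulr_suml; apply: eq_bigr => b _; rewrite mulrA.
Qed.

Lemma mu_win_Z0 n (o : seq (option A)) : size o = n ->
  mu_win p P (fun w : n.-tuple A => all2 ok o w) = Z0 o.
Proof.
move=> <-; case: o => [|x o].
  by rewrite /mu_win big_mkcond /= big_tuple0.
rewrite /mu_win big_mkcond /= big_tuple_cons.
transitivity (\sum_(b | ok x b) p b * Sfun b o).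
  rewrite [RHS]big_mkcond; apply: eq_bigr => b _ /=.
  case: (ok x b) => /=; last by rewrite big1.
  by rewrite mulr_sumr /Sfun [RHS]big_mkcond; apply: eq_bigr => w _; case: ifP; rewrite ?mulr0.
case: x => [a|] /=; first by rewrite big_pred1_eq Sfun_K.
by rewrite Sfun_stat.
Qed.

Definition phi (x : R) : R := if x == 0 then 0 else x * ln x.

Lemma phi1 : phi 1 = 0.
Proof. by rewrite /phi oner_eq0 ln1 mulr0. Qed.

Lemma phi0 : phi 0 = 0.
Proof. by rewrite /phi eqxx. Qed.

Lemma phi_mul x y : 0 <= x -> 0 <= y -> phi (x * y) = x * phi y + y * phi x.
Proof.
rewrite le0r => /orP [/eqP ->|x0]; first by rewrite mul0r phi0 mul0r mulr0 addr0.
rewrite le0r => /orP [/eqP ->|y0]; first by rewrite mulr0 phi0 mul0r mulr0 addr0.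
have xy0 : 0 < x * y by rewrite mulr_gt0.
rewrite /phi (gt_eqF xy0) (gt_eqF x0) (gt_eqF y0) lnM ?posrE //.
ring.
Qed.

Definition T (n : nat) : R := \sum_(o : n.-tuple (option A)) phi (Z0 o).
Definition V (d : nat) (a : A) (n : nat) : R := \sum_(o : n.-tuple (option A)) phi (Kd d a o).
Definition vd (d n : nat) : R := \sum_a p a * V d a n.
Definition g (d : nat) : R := \sum_a p a * \sum_b phi (Pn d a b).
Definition h : R := \sum_a phi (p a).

Lemma W_eq n : forall d a, \sum_(o : n.-tuple (option A)) Kd d a o = 2 ^+ n.
Proof.
elim: n => [|n IH] d a; first by rewrite big_tuple0 expr0.
rewrite big_tuple_cons big_option_sum /= IH.
under eq_bigr do under eq_bigr do rewrite /=.
under eq_bigr do rewrite -mulr_sumr IH.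
rewrite -mulr_suml Pn_row mul1r exprS; ring.
Qed.

Lemma V0 d a : V d a 0 = 0.
Proof. by rewrite /V big_tuple0 /= phi1. Qed.

Lemma V_rec n d a : V d a n.+1 =
  V d.+1 a n + \sum_b (Pn d a b * V 1 b n + phi (Pn d a b) * 2 ^+ n).
Proof.
rewrite /V big_tuple_cons big_option_sum /=; congr (_ + _).
apply: eq_bigr => b _.
under eq_bigr do rewrite phi_mul ?Pn_ge0 ?Kd_ge0 //.
by rewrite big_split /= -mulr_sumr -mulr_suml W_eq (mulrC (2 ^+ n)).
Qed.

Lemma vd0 d : vd d 0 = 0.
Proof. by rewrite /vd big1 // => a _; rewrite V0 mulr0. Qed.

Lemma vd_rec d n : vd d n.+1 = vd d.+1 n + vd 1 n + 2 ^+ n * g d.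
Proof.
rewrite /vd /g.
under eq_bigr do rewrite V_rec mulrDr big_split /= mulrDr.
rewrite big_split big_split /= addrA; congr (_ + _ + _).
  under eq_bigr do rewrite mulr_sumr.
  rewrite exchange_big /=; apply: eq_bigr => b _.
  by rewrite -(Pn_stat d b) mulr_suml; apply: eq_bigr => a _; rewrite mulrA.
rewrite mulr_sumr; apply: eq_bigr => a _; rewrite !mulr_sumr; apply: eq_bigr => b _.
ring.
Qed.

Lemma T0 : T 0 = 0.
Proof. by rewrite /T big_tuple0 /= phi1. Qed.

Lemma T_rec n : T n.+1 = T n + vd 1 n + 2 ^+ n * h.
Proof.
rewrite /T big_tuple_cons big_option_sum /= -addrA; congr (_ + _).
rewrite /vd /h mulr_sumr -big_split /=; apply: eq_bigr => a _.
under eq_bigr do rewrite phi_mul ?p_ge0 ?Kd_ge0 //.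
by rewrite big_split /= -mulr_sumr -mulr_suml W_eq mulrC.
Qed.

Lemma all2_tnth (S U : Type) (r : S -> U -> bool) n (s : n.-tuple S) (t : n.-tuple U) :
  all2 r s t = [forall j, r (tnth s j) (tnth t j)].
Proof.
elim: n s t => [|n IH] s t.
  by rewrite tuple0 (tuple0 t) /=; apply/esym/forallP => -[].
case/tupleP: s => x s; case/tupleP: t => y t /=.
rewrite IH; apply/andP/forallP.
- case=> H0 /forallP H i; case: (unliftP ord0 i) => [j ->|->]; by rewrite ?tnthS ?tnth0.
- move=> H; split; first by have := H ord0; rewrite !tnth0.
  by apply/forallP => j; have := H (lift ord0 j); rewrite !tnthS.
Qed.

Section Atoms.
Variables (n : nat) (S : {set 'I_n}).

Definition of_f (f : {ffun {i : 'I_n | i \in S} -> A}) : n.-tuple (option A) :=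
  [tuple omap f (insub j) | j < n].

Definition supp (o : n.-tuple (option A)) : {set 'I_n} := [set j | tnth o j != None].

Lemma atom_eq (f : {ffun {i : 'I_n | i \in S} -> A}) (w : n.-tuple A) :
  [forall i : {i : 'I_n | i \in S}, tnth w (val i) == f i] = all2 ok (of_f f) w.
Proof.
rewrite all2_tnth; apply/forallP/forallP => H j.
  by rewrite tnth_mktuple; case: insubP => [u uS <-|] //=; exact: H.
by have := H (val j); rewrite tnth_mktuple valK.
Qed.

Lemma supp_of_f (f : {ffun {i : 'I_n | i \in S} -> A}) : supp (of_f f) = S.
Proof.
apply/setP => j; rewrite inE tnth_mktuple.
by case: insubP => [u uS _|jS] /=; [rewrite uS | rewrite (negbTE jS)].
Qed.

Lemma mu_atom_Z0 (f : {ffun {i : 'I_n | i \in S} -> A}) : mu_atom p P f = Z0 (of_f f).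
Proof.
rewrite /mu_atom /mu_win; under eq_bigl do rewrite atom_eq.
by have := @mu_win_Z0 n (of_f f) (size_tuple _); rewrite /mu_win.
Qed.

Lemma sum_atoms :
  \sum_(f : {ffun {i : 'I_n | i \in S} -> A}) phi (mu_atom p P f) =
  \sum_(o : n.-tuple (option A) | supp o == S) phi (Z0 o).
Proof.
have [a0 _] : exists a0 : A, true.
  case: (pickP A) => [a0 _|A0]; first by exists a0.
  by have := p_sum; rewrite big_pred0 // => /esym/eqP; rewrite oner_eq0.
set h' := fun o : n.-tuple (option A) =>
  [ffun i : {i : 'I_n | i \in S} => odflt a0 (tnth o (val i))].
rewrite (reindex_onto (fun f => of_f f) h').
  apply: eq_big => f.
    rewrite supp_of_f eqxx /=; apply/esym/eqP/ffunP => i.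
    by rewrite /h' ffunE tnth_mktuple valK.
  by move=> _; rewrite mu_atom_Z0.
move=> o /eqP so; apply: eq_from_tnth => j; rewrite tnth_mktuple.
case: insubP => [u uS Hj|jS] /=.
  rewrite /h' ffunE Hj; have : j \in supp o by rewrite so.
  by rewrite inE; case: (tnth o j).
by move: jS; rewrite -so inE negbK => /eqP ->.
Qed.

End Atoms.

Lemma sum_H_alpha n : \sum_(S : {set 'I_n}) H_alpha p P S = - T n.
Proof.
have -> : \sum_(S : {set 'I_n}) H_alpha p P S =
  \sum_(S : {set 'I_n}) - \sum_(f : {ffun {i : 'I_n | i \in S} -> A}) phi (mu_atom p P f) by [].
rewrite sumrN; congr (- _).
under eq_bigr do rewrite sum_atoms.
rewrite /T (partition_big (@supp n) predT) //.
Qed.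

Fixpoint nones (k : nat) : seq (option A) := if k is k'.+1 then None :: nones k' else [::].

Lemma Kd_nones k : forall d a o, Kd d a (nones k ++ o) = Kd (d + k) a o.
Proof. by elim: k => [|k IH] d a o /=; rewrite ?addn0 // IH addSnnS. Qed.

Lemma Z0_nones k o : Z0 (nones k ++ o) = Z0 o.
Proof. by elim: k. Qed.

Lemma size_nones k : size (nones k) = k.
Proof. by elim: k => //= k ->. Qed.

Lemma all2_last k : forall (w : seq A) b0 b, size w = k.+1 ->
  all2 ok (nones k ++ [:: Some b]) w = (nth b0 w k == b).
Proof.
elim: k => [|k IH] [|x w] b0 b //=; first by case: w => //= _; rewrite andbT.
by case=> Hw; rewrite (IH w b0 b Hw).
Qed.

Lemma q_eq i a b : mu_win p P (fun w : i.+2.-tuple A =>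
  (tnth w ord0 == a) && (tnth w ord_max == b)) = p a * Pn i.+1 a b.
Proof.
transitivity (mu_win p P (fun w : i.+2.-tuple A =>
  all2 ok (Some a :: nones i ++ [:: Some b]) w)).
  rewrite /mu_win; apply: eq_bigl => w; case/tupleP: w => x w.
  by rewrite tnth0 (tnth_nth b) /= (all2_last i w b b) ?size_tuple.
rewrite (@mu_win_Z0 i.+2); last by rewrite /= size_cat size_nones addn1.
by rewrite /= Kd_nones /= mulr1.
Qed.

Lemma r_eq i b : mu_win p P (fun w : i.+2.-tuple A => tnth w ord_max == b) = p b.
Proof.
transitivity (mu_win p P (fun w : i.+2.-tuple A => all2 ok (nones i.+1 ++ [:: Some b]) w)).
  by rewrite /mu_win; apply: eq_bigl => w; rewrite (tnth_nth b) (all2_last i.+1 w b b) ?size_tuple.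
rewrite (@mu_win_Z0 i.+2); last by rewrite size_cat size_nones addn1.
by rewrite Z0_nones /= mulr1.
Qed.

Lemma term_eq d a b :
  (if p a * Pn d a b == 0 then 0 else p a * Pn d a b * ln (p a * Pn d a b / p b)) =
  p a * Pn d a b * ln (p a) + p a * phi (Pn d a b) - p a * Pn d a b * ln (p b).
Proof.
have pb_ge : p a * Pn d a b <= p b.
  rewrite -(Pn_stat d b) (bigD1 a) //= lerDl sumr_ge0 // => c _.
  by rewrite mulr_ge0 ?p_ge0 ?Pn_ge0.
case: ifP => [/eqP q0|/negbT q0].
  move/eqP: (q0); rewrite mulf_eq0 => /orP [/eqP pa0|/eqP Pn0'].
    rewrite pa0; ring.
  rewrite Pn0' phi0; ring.
move: (q0); rewrite mulf_eq0 negb_or => /andP [pa0 Pn0'].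
have pa_gt : 0 < p a by rewrite lt0r pa0 p_ge0.
have Pn_gt : 0 < Pn d a b by rewrite lt0r Pn0' Pn_ge0.
have pb_gt : 0 < p b by apply: lt_le_trans pb_ge; rewrite mulr_gt0.
rewrite ln_div ?posrE ?mulr_gt0 // lnM ?posrE // /phi (negbTE Pn0').
ring.
Qed.

Lemma H_given_eq i : H_alpha_given_alpha_i p P i.+1 = - g i.+1.
Proof.
rewrite /H_alpha_given_alpha_i; congr (- _).
under eq_bigr do under eq_bigr do rewrite q_eq r_eq term_eq.
under eq_bigr do rewrite !big_split.
rewrite !big_split.
have -> : \sum_a \sum_b p a * Pn i.+1 a b * ln (p a) = \sum_a p a * ln (p a).
  apply: eq_bigr => a _.
  under eq_bigr do rewrite mulrAC.
  by rewrite -mulr_sumr Pn_row mulr1.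
have -> : \sum_a \sum_b - (p a * Pn i.+1 a b * ln (p b)) = - \sum_a p a * ln (p a).
  under eq_bigr do rewrite sumrN.
  rewrite sumrN exchange_big; congr (- _); apply: eq_bigr => b _.
  by rewrite -mulr_suml Pn_stat.
rewrite /g; under [X in _ = X]eq_bigr do rewrite mulr_sumr.
by rewrite [LHS]/= addrAC subrr add0r.
Qed.

Definition c2 (k : nat) : R := k%:R * 2 ^+ k / 2.
Definition Y n : R := \sum_(j < n) g j.+1 * c2 (n - j.+1).
Definition X d m : R := \sum_(j < m) g (d + j) * 2 ^+ (m - j.+1).

Lemma two_neq0 : (2 : R) != 0. Proof. by rewrite pnatr_eq0. Qed.

Lemma c2S k : c2 k.+1 = 2 * c2 k + 2 ^+ k.
Proof. by rewrite /c2 exprS -addn1 natrD; field. Qed.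

Lemma c20 : c2 0 = 0.
Proof. by rewrite /c2 !mul0r. Qed.

Lemma XS d m : X d m.+1 = g d * 2 ^+ m + X d.+1 m.
Proof.
rewrite /X big_ord_recl /= addn0 subn1 /=; congr (_ + _).
by apply: eq_bigr => j _; rewrite /bump /= add1n addnS addSn subSS.
Qed.

Lemma YS m : Y m.+1 = 2 * Y m + X 1 m.
Proof.
rewrite /Y /X big_ord_recr /= subnn c20 mulr0 addr0 mulr_sumr -big_split /=.
apply: eq_bigr => j _; rewrite subSS -subnSK // c2S add1n; ring.
Qed.

Lemma vd_closed m : forall d, vd d m = X d m + Y m.
Proof.
elim: m => [|m IH] d; first by rewrite vd0 /X /Y !big_ord0 addr0.
rewrite vd_rec !IH XS YS; ring.
Qed.

Lemma T_closed n : T n = (2 ^+ n - 1) * h + Y n.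
Proof.
elim: n => [|n IH]; first by rewrite T0 /Y big_ord0 expr0 subrr mul0r addr0.
rewrite T_rec IH vd_closed YS exprS; ring.
Qed.

Definition K : R := #|A|%:R.

Lemma phi_le0 x : 0 <= x -> x <= 1 -> phi x <= 0.
Proof.
move=> x0 x1; rewrite /phi; case: ifP => // _.
by rewrite mulr_ge0_le0 // ln_le0.
Qed.

Lemma phi_ge x : 0 <= x -> -1 <= phi x.
Proof.
rewrite le0r => /orP [/eqP ->|x0]; first by rewrite phi0 lerN10.
rewrite /phi (gt_eqF x0).
have H : - ln x <= x^-1 - 1.
  have := @le_ln1Dx R (x^-1 - 1); rewrite addrCA subrr addr0 lnV ?posrE //; apply.
  by rewrite ltrBrDl subrr invr_gt0.
have := ler_wpM2l (ltW x0) H; rewrite mulrN mulrBr mulfV ?gt_eqF // mulr1.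
move=> H2; have : 0 <= x by exact: ltW.
lra.
Qed.

Lemma Pn_le1 d a b : Pn d a b <= 1.
Proof.
rewrite -(Pn_row d a) (bigD1 b) //= lerDl sumr_ge0 // => c _; exact: Pn_ge0.
Qed.

Lemma p_le1 a : p a <= 1.
Proof. rewrite -p_sum (bigD1 a) //= lerDl sumr_ge0 // => c _; exact: p_ge0. Qed.

Lemma g_le0 d : g d <= 0.
Proof.
rewrite /g sumr_le0 // => a _; rewrite mulr_ge0_le0 ?p_ge0 //.
by rewrite sumr_le0 // => b _; rewrite phi_le0 ?Pn_ge0 ?Pn_le1.
Qed.

Lemma g_ge d : - K <= g d.
Proof.
rewrite /g; apply: (@le_trans _ _ (\sum_a p a * - K)).
  by rewrite -mulr_suml p_sum mul1r.
apply: ler_sum => a _; apply: ler_wpM2l; first exact: p_ge0.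
apply: (@le_trans _ _ (\sum_(b : A) (-1 : R))).
  by rewrite sumr_const /K mulNrn.
by apply: ler_sum => b _; apply: phi_ge; exact: Pn_ge0.
Qed.

Lemma h_le0 : h <= 0.
Proof. by rewrite /h sumr_le0 // => a _; rewrite phi_le0 ?p_ge0 ?p_le1. Qed.

Lemma K_ge0 : 0 <= K. Proof. by rewrite /K ler0n. Qed.

Definition b j : R := g j.+1 / 2 ^+ j.+1.
Definition E n : R := \sum_(j < n) j.+1%:R * b j.

Lemma key_Y n : n%:R^-1 * ((2 ^+ n)^-1 * Y n) =
  2^-1 * \sum_(j < n) b j - n%:R^-1 * (2^-1 * E n).
Proof.
rewrite /Y /E !mulr_sumr -sumrB; apply: eq_bigr => j _.
have hj : (j.+1 <= n)%N by exact: ltn_ord.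
have n0 : n%:R != 0 :> R by rewrite pnatr_eq0 -lt0n (leq_trans _ hj).
have H2 : (2:R) ^+ n = 2 ^+ (n - j.+1) * 2 ^+ j.+1 by rewrite -exprD subnK.
rewrite /c2 /b natrB // H2.
field.
by rewrite n0 !expf_neq0 ?pnatr_eq0.
Qed.

Lemma asc_identity n : n%:R^-1 * ((2 ^+ n)^-1 * - T n) =
  - 2^-1 * \sum_(j < n) b j + n%:R^-1 * (((2 ^+ n)^-1 - 1) * h + 2^-1 * E n).
Proof.
case: n => [|n]; first by rewrite big_ord0 !invr0 !mul0r mulr0 addr0.
have n0 : n.+1%:R != 0 :> R by rewrite pnatr_eq0.
have e0 : (2:R) ^+ n.+1 != 0 by rewrite expf_neq0 ?pnatr_eq0.
rewrite T_closed.
have := key_Y n.+1; set y := Y _; set s := \sum_(j < _) _; set e := E _ => Hk.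
have -> : n.+1%:R^-1 * ((2 ^+ n.+1)^-1 * - ((2 ^+ n.+1 - 1) * h + y)) =
  - (n.+1%:R^-1 * ((2 ^+ n.+1)^-1 * ((2 ^+ n.+1 - 1) * h))) - n.+1%:R^-1 * ((2 ^+ n.+1)^-1 * y).
  ring.
rewrite Hk; field.
by rewrite e0 /= addrC natr1.
Qed.

Lemma sum_geom n : \sum_(j < n) (2 ^+ j.+1)^-1 = 1 - (2 ^+ n)^-1 :> R.
Proof.
elim: n => [|n IH]; first by rewrite big_ord0 expr0 invr1 subrr.
rewrite big_ord_recr /= IH !exprS; field.
by rewrite expf_neq0 ?pnatr_eq0.
Qed.

Lemma sum_jgeom n : \sum_(j < n) j.+1%:R / 2 ^+ j.+1 = 2 - n.+2%:R / 2 ^+ n :> R.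
Proof.
elim: n => [|n IH]; first by rewrite big_ord0 expr0 divr1 subrr.
rewrite big_ord_recr /= IH !exprS -!natr1; field.
by rewrite expf_neq0 ?pnatr_eq0.
Qed.

Lemma b_le0 j : b j <= 0.
Proof. by rewrite /b mulr_le0_ge0 ?g_le0 // invr_ge0 exprn_ge0. Qed.

Lemma b_ge j : - K / 2 ^+ j.+1 <= b j.
Proof. by rewrite /b ler_wpM2r ?g_ge // invr_ge0 exprn_ge0. Qed.

Lemma E_le0 n : E n <= 0.
Proof. by rewrite /E sumr_le0 // => j _; rewrite mulr_ge0_le0 ?b_le0. Qed.

Lemma E_ge n : - (2 * K) <= E n.
Proof.
apply: (@le_trans _ _ (\sum_(j < n) j.+1%:R * (- K / 2 ^+ j.+1))); last first.
  by apply: ler_sum => j _; rewrite ler_wpM2l ?b_ge.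
have -> : \sum_(j < n) j.+1%:R * (- K / 2 ^+ j.+1) = - K * \sum_(j < n) j.+1%:R / 2 ^+ j.+1.
  by rewrite mulr_sumr; apply: eq_bigr => j _; ring.
rewrite sum_jgeom.
have t0 : 0 <= n.+2%:R / 2 ^+ n :> R by rewrite divr_ge0 // exprn_ge0.
have := K_ge0; move: t0; set t := _ / _; set k := K => t0 k0.
nra.
Qed.

Definition Q n : R := ((2 ^+ n)^-1 - 1) * h + 2^-1 * E n.

Lemma Q_le n : Q n <= - h.
Proof.
rewrite /Q.
have e1 : 0 <= (2 ^+ n)^-1 :> R by rewrite invr_ge0 exprn_ge0.
have e2 : (2 ^+ n)^-1 <= 1 :> R by rewrite invf_le1 ?exprn_gt0 // exprn_ege1 // ler1n.
have := h_le0; have := E_le0 n; move: e1 e2.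
set u := (2 ^+ n)^-1; set hh := h; set ee := E n => e1 e2 He Hh.
nra.
Qed.

Lemma Q_ge n : - K <= Q n.
Proof.
rewrite /Q.
have e1 : 0 <= (2 ^+ n)^-1 :> R by rewrite invr_ge0 exprn_ge0.
have e2 : (2 ^+ n)^-1 <= 1 :> R by rewrite invf_le1 ?exprn_gt0 // exprn_ege1 // ler1n.
have := h_le0; have := E_ge n; move: e1 e2.
set u := (2 ^+ n)^-1; set hh := h; set ee := E n => e1 e2 He Hh.
nra.
Qed.

Lemma inv_cvg0 : (fun n : nat => (n%:R : R)^-1) @ \oo --> 0.
Proof. rewrite -cvg_shiftS; exact: cvg_harmonic. Qed.

Lemma main :
  let c := fun (n : nat) (_ : {set 'I_n}) => (2 : R) ^- n in
  let F := fun i : nat => (2 : R) ^- i * H_alpha_given_alpha_i p P i in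
  cvgn (fun N : nat => \sum_(1 <= i < N) F i) /\
  asc_seq p P c @ \oo --> 2^-1 * limn (fun N : nat => \sum_(1 <= i < N) F i).
Proof.
move=> c F.
set s := fun N : nat => \sum_(1 <= i < N) F i.
have F_eq j : F j.+1 = - b j.
  by rewrite /F H_given_eq /b mulrN mulrC.
have s_shift n : s n.+1 = - \sum_(j < n) b j.
  rewrite /s big_add1 /= big_mkord -sumrN; apply: eq_bigr => j _; exact: F_eq.
have s0 : s 0 = 0 by rewrite /s big_geq.
have s_mono : {homo s : n m / (n <= m)%N >-> n <= m}.
  apply/nondecreasing_seqP; case=> [|n]; first by rewrite s0 s_shift big_ord0 oppr0.
  by rewrite !s_shift big_ord_recr /= opprD lerDl oppr_ge0 b_le0.
have s_ub n : s n <= K.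
  case: n => [|n]; first by rewrite s0 K_ge0.
  rewrite s_shift; apply: (@le_trans _ _ (\sum_(j < n) K / 2 ^+ j.+1)).
    rewrite -sumrN; apply: ler_sum => j _; rewrite lerNl -mulNr; exact: b_ge.
  rewrite -mulr_sumr sum_geom ler_piMr ?K_ge0 // lerBlDr lerDl invr_ge0 exprn_ge0 //.
have cs : cvgn s.
  apply: nondecreasing_is_cvgn => //; exists K => _ [n _ <-]; exact: s_ub.
split; first exact: cs.
have Hs1 : (fun n => s n.+1) @ \oo --> limn s by rewrite (cvg_shiftS s).
have Heq : asc_seq p P c =1 (fun n => 2^-1 * s n.+1 + n%:R^-1 * Q n).
  move=> n; rewrite /asc_seq /c -mulr_sumr sum_H_alpha asc_identity s_shift /Q.
  ring.
rewrite (eq_cvg _ _ Heq) -(addr0 (2^-1 * limn s)).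
apply: cvgD; first exact: cvgMr.
apply: (@squeeze_cvgr _ _ _ _ (fun n => n%:R^-1 * - K) (fun n => n%:R^-1 * - h)).
- apply: nearW => n /=; rewrite !ler_wpM2l ?invr_ge0 ?ler0n ?Q_le ?Q_ge //.
- by rewrite -(mul0r (- K)); apply: cvgMl; exact: inv_cvg0.
- by rewrite -(mul0r (- h)); apply: cvgMl; exact: inv_cvg0.
Qed.

End Markov.

Theorem proposition5p10 (R : realType) (A : finType) (p : A -> R) (P : A -> A -> R) :
  stochastic_matrix P -> stationary_prob_vector p P ->
  let c := fun (n : nat) (_ : {set 'I_n}) => (2 : R) ^- n in
  let F := fun i : nat => (2 : R) ^- i * H_alpha_given_alpha_i p P i in
  cvgn (fun N : nat => \sum_(1 <= i < N) F i) /\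
  asc_seq p P c @ \oo --> 2^-1 * limn (fun N : nat => \sum_(1 <= i < N) F i).
Proof. move=> HP Hp; exact: main. Qed.
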